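(* Consider a hyperbolic triangle with vertices $v_i,v_j,v_k$, carrying circles of radii $r_i,r_j,r_k>0$ centered at the vertices, with inversive distances $a=I_{jk}$, $b=I_{ki}$, $c=I_{ij}$, all $>1$, so that the edge lengths are $l_{jk}=\operatorname{arccosh}(\cosh r_j\cosh r_k+a\sinh r_j\sinh r_k)$, etc. Suppose these three lengths satisfy the strict triangle inequalities and the orthogonal circle of the face is compact, with hyperbolic radius $\rho_{ijk}>0$. Then $\Xi_{ijk}>0$ and $$\sinh r_i\sinh r_j\sinh r_k\sqrt{\Delta_{abc}}=\tanh\rho_{ijk}\sqrt{1+2xyz-x^2-y^2-z^2}=\sinh\rho_{ijk}\sqrt{\Xi_{ijk}}.$$
   Context: Notation: $p=\cosh r_i$, $q=\cosh r_j$, $r=\cosh r_k$, $x=\cosh l_{jk}$, $y=\cosh l_{ki}$, $z=\cosh l_{ij}$. The discriminant of inversive distance is $\Delta_{abc}=a^2+b^2+c^2+2abc-1$. The discriminant of compactness is $$\Xi_{ijk}=p^2(1-x^2)+q^2(1-y^2)+r^2(1-z^2)+2pq(xy-z)+2pr(xz-y)+2qr(yz-x).$$ Orthogonal circle: embed the triangle isometrically in the Poincaré disk $\mathbb D\subset\mathbb R^2$; the three hyperbolic vertex circles become disjoint Euclidean circles, and the orthogonal circle is the unique Euclidean circle orthogonal to all three. It is called compact if it lies in the open disk $\mathbb D$; then it is a hyperbolic circle with center $O_{ijk}$ and hyperbolic radius $\rho_{ijk}$, satisfying $\cosh d(O_{ijk},v_\alpha)=\cosh r_\alpha\cosh\rho_{ijk}$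 for $\alpha=i,j,k$. *)

(* Defs.v *)
From Stdlib Require Import Reals.
Open Scope R_scope.

Record pt3 := Pt3 { c0 : R; c1 : R; c2 : R }.

Definition mink (u v : pt3) : R := c0 u * c0 v - c1 u * c1 v - c2 u * c2 v.

(* u lies on the upper sheet of the hyperboloid, i.e. is a point of H^2. *)
Definition in_H2 (u : pt3) : Prop := mink u u = 1 /\ 0 < c0 u.

Definition arcosh (t : R) : R := ln (t + sqrt (t * t - 1)).

(* hyperbolic distance in the hyperboloid model: cosh d(u,v) = <u,v> *)
Definition hdist (u v : pt3) : R := arcosh (mink u v).

(* discriminant of inversive distance (named Delta_id to avoid clash with Stdlib Delta) *)
Definition Delta_id (a b c : R) : R := a^2 + b^2 + c^2 + 2*a*b*c - 1.

(* discriminant of compactness, p q r = cosh radii, x y z = cosh edge lengths *)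
Definition Xi (p q r x y z : R) : R :=
  p^2*(1 - x^2) + q^2*(1 - y^2) + r^2*(1 - z^2)
  + 2*p*q*(x*y - z) + 2*p*r*(x*z - y) + 2*q*r*(y*z - x).

Definition orth_circle (O : pt3) (rho : R) (v : pt3) (rv : R) : Prop :=
  cosh (hdist O v) = cosh rv * cosh rho.

Definition compact_orthogonal_circle (vi vj vk : pt3) (ri rj rk : R)
    (O : pt3) (rho : R) : Prop :=
  in_H2 O /\ 0 < rho /\
  orth_circle O rho vi ri /\ orth_circle O rho vj rj /\ orth_circle O rho vk rk.

(* Main.v *)
Require Import Defs.
From Stdlib Require Import Reals Lra Psatz.
Open Scope R_scope.

Lemma mink_ge1 u v : in_H2 u -> in_H2 v -> 1 <= mink u v.
Proof.
  destruct u as [u0 u1 u2], v as [v0 v1 v2]; unfold in_H2, mink; simpl.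
  intros [hu pu] [hv pv].
  set (A := u1*u1+u2*u2). set (B := v1*v1+v2*v2).
  assert (hu' : u0*u0 = 1 + A) by (unfold A; lra).
  assert (hv' : v0*v0 = 1 + B) by (unfold B; lra).
  assert (A0 : 0 <= A) by (unfold A; nra).
  assert (B0 : 0 <= B) by (unfold B; nra).
  assert (U1 : 1 <= u0) by nra.
  assert (V1 : 1 <= v0) by nra.
  assert (cs : (u1*v1+u2*v2)^2 <= A*B) by (unfold A, B; assert (0 <= (u1*v2-u2*v1)^2) by apply pow2_ge_0; nra).
  assert (e : (u0*v0)^2 = (1+A)*(1+B)).
  { replace ((u0*v0)^2) with ((u0*u0)*(v0*v0)) by ring. rewrite hu', hv'. ring. }
  assert (up : u0*v0 <= 1 + (A+B)/2).
  { assert (h2 : (u0*v0)^2 <= (1+(A+B)/2)^2).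
    { rewrite e. assert (0 <= (A-B)^2) by apply pow2_ge_0. nra. }
    assert (0 <= u0*v0) by nra. 
    destruct (Rle_or_lt (u0*v0) (1 + (A+B)/2)); auto. nra. }
  destruct (Rle_or_lt 1 (u0 * v0 - u1 * v1 - u2 * v2)) as [h|h]; auto.
  exfalso.
  set (w := u1*v1+u2*v2) in *.
  assert (w0 : u0*v0 - 1 < w) by (unfold w; lra).
  assert (m0 : 1 <= u0*v0) by nra.
  assert (w2 : (u0*v0-1)^2 < w^2).
  { assert (0 < (w - (u0*v0-1)) * (w + (u0*v0-1))) by (apply Rmult_lt_0_compat; lra). nra. }
  replace ((u0*v0-1)^2) with ((u0*v0)^2 - 2*(u0*v0) + 1) in w2 by ring.
  rewrite e in w2. lra.
Qed.

Lemma cosh_arcosh t : 1 <= t -> cosh (arcosh t) = t.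
Proof.
  intro ht. unfold arcosh, cosh.
  set (s := sqrt (t*t-1)).
  assert (s0 : 0 <= s) by apply sqrt_pos.
  assert (ss : s*s = t*t-1) by (apply sqrt_sqrt; nra).
  assert (pos : 0 < t + s) by lra.
  rewrite exp_Ropp, exp_ln by exact pos.
  apply (Rmult_eq_reg_r (2*(t+s))); [|lra]. field_simplify; [|lra]. nra.
Qed.

Lemma arcosh_nonneg t : 1 <= t -> 0 <= arcosh t.
Proof.
  intro ht. unfold arcosh. rewrite <- ln_1.
  assert (0 <= sqrt (t*t-1)) by apply sqrt_pos.
  destruct (Req_dec (t + sqrt (t*t-1)) 1) as [e|e]; [rewrite e; lra|]. left; apply ln_increasing; lra.
Qed.

Lemma cosh_plus' u v : cosh (u+v) = cosh u * cosh v + sinh u * sinh v.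
Proof. unfold cosh, sinh. rewrite Ropp_plus_distr, !exp_plus. field. Qed.

Lemma cosh_minus' u v : cosh (u-v) = cosh u * cosh v - sinh u * sinh v.
Proof. unfold cosh, sinh, Rminus. rewrite Ropp_plus_distr, Ropp_involutive, !exp_plus, !exp_Ropp.
  field. split; apply Rgt_not_eq, exp_pos. Qed.

Lemma cosh_sinh u : cosh u ^ 2 = 1 + sinh u ^ 2.
Proof. unfold cosh, sinh. rewrite !exp_Ropp.
  assert (exp u <> 0) by apply Rgt_not_eq, exp_pos. field. auto. Qed.

Lemma cosh_pos u : 0 < cosh u.
Proof. unfold cosh. assert (0 < exp u) by apply exp_pos. assert (0 < exp (-u)) by apply exp_pos. lra. Qed.

Lemma sinh_pos u : 0 < u -> 0 < sinh u.
Proof. intro h. rewrite <- sinh_0. now apply sinh_lt. Qed.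

Lemma cosh_lt2 u v : 0 < v + u -> 0 < v - u -> cosh u < cosh v.
Proof.
  intros h1 h2.
  assert (d : cosh v - cosh u = 2 * sinh ((v+u)/2) * sinh ((v-u)/2)).
  { replace v with ((v+u)/2 + (v-u)/2) at 1 by field.
    replace u with ((v+u)/2 - (v-u)/2) at 3 by field.
    rewrite cosh_plus', cosh_minus'. ring. }
  assert (0 < sinh ((v+u)/2)) by (apply sinh_pos; lra).
  assert (0 < sinh ((v-u)/2)) by (apply sinh_pos; lra).
  assert (0 < 2 * sinh ((v+u)/2) * sinh ((v-u)/2)) by (apply Rmult_lt_0_compat; lra).
  lra.
Qed.

Lemma gram4 (O u v w : pt3) :
  let g00 := mink O O in
  let b1 := mink O u in let b2 := mink O v in let b3 := mink O w in
  let guu := mink u u in let gvv := mink v v in let gww := mink w w in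
  let guv := mink u v in let gvw := mink v w in let guw := mink u w in
  g00 * (guu*gvv*gww + 2*guv*gvw*guw - guu*gvw^2 - gvv*guw^2 - gww*guv^2)
  - (b1^2*(gvv*gww - gvw^2) + b2^2*(guu*gww - guw^2) + b3^2*(guu*gvv - guv^2)
     + 2*b1*b2*(guw*gvw - guv*gww) + 2*b1*b3*(guv*gvw - gvv*guw)
     + 2*b2*b3*(guv*guw - guu*gvw)) = 0.
Proof.
  destruct O, u, v, w. unfold mink; simpl. ring.
Qed.

Lemma delta_poly (Ei Ej Ek a b c : R) : Ei <> 0 -> Ej <> 0 -> Ek <> 0 ->
  let p := (Ei + /Ei)/2 in let q := (Ej + /Ej)/2 in let r := (Ek + /Ek)/2 in
  let si := (Ei - /Ei)/2 in let sj := (Ej - /Ej)/2 in let sk := (Ek - /Ek)/2 in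
  let x := q*r + a*sj*sk in let y := r*p + b*sk*si in let z := p*q + c*si*sj in
  1 + 2*x*y*z - x^2 - y^2 - z^2 - Xi p q r x y z = (si*sj*sk)^2 * Delta_id a b c.
Proof.
  intros hi hj hk p q r si sj sk x y z. unfold x, y, z, p, q, r, si, sj, sk, Xi, Delta_id.
  field. auto.
Qed.

Lemma mink_sym u v : mink u v = mink v u.
Proof. unfold mink; ring. Qed.

Lemma cosh_ge1 u : 1 <= cosh u.
Proof. pose proof (cosh_sinh u). pose proof (cosh_pos u). assert (0 <= sinh u ^ 2) by apply pow2_ge_0. nra. Qed.

Lemma cosh_hdist u v : in_H2 u -> in_H2 v -> cosh (hdist u v) = mink u v.
Proof. intros. unfold hdist. apply cosh_arcosh, mink_ge1; auto. Qed.

Lemma len_val r1 r2 a : 0 < r1 -> 0 < r2 -> 1 < a ->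
  1 <= cosh r1 * cosh r2 + a * sinh r1 * sinh r2.
Proof. intros. pose proof (cosh_ge1 r1). pose proof (cosh_ge1 r2).
  pose proof (sinh_pos r1 H). pose proof (sinh_pos r2 H0).
  assert (0 < a * sinh r1 * sinh r2) by (apply Rmult_lt_0_compat; [apply Rmult_lt_0_compat|]; lra).
  assert (0 <= (cosh r1 - 1) * (cosh r2 - 1)) by (apply Rmult_le_pos; lra). nra. Qed.

Theorem mainTheorem2 (vi vj vk : pt3) (ri rj rk a b c : R) (O : pt3) (rho : R) :
  in_H2 vi -> in_H2 vj -> in_H2 vk ->
  0 < ri -> 0 < rj -> 0 < rk ->
  1 < a -> 1 < b -> 1 < c ->
  hdist vj vk = arcosh (cosh rj * cosh rk + a * sinh rj * sinh rk) ->
  hdist vk vi = arcosh (cosh rk * cosh ri + b * sinh rk * sinh ri) ->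
  hdist vi vj = arcosh (cosh ri * cosh rj + c * sinh ri * sinh rj) ->
  hdist vj vk < hdist vk vi + hdist vi vj ->
  hdist vk vi < hdist vi vj + hdist vj vk ->
  hdist vi vj < hdist vj vk + hdist vk vi ->
  compact_orthogonal_circle vi vj vk ri rj rk O rho ->
  let p := cosh ri in let q := cosh rj in let r := cosh rk in
  let x := cosh (hdist vj vk) in let y := cosh (hdist vk vi) in
  let z := cosh (hdist vi vj) in
  0 < Xi p q r x y z /\
  sinh ri * sinh rj * sinh rk * sqrt (Delta_id a b c)
    = tanh rho * sqrt (1 + 2*x*y*z - x^2 - y^2 - z^2) /\
  tanh rho * sqrt (1 + 2*x*y*z - x^2 - y^2 - z^2)
    = sinh rho * sqrt (Xi p q r x y z).
Proof.
  intros Hi Hj Hk ri0 rj0 rk0 a1 b1 c1 Ex Ey Ez T1 T2 T3 [HO [rho0 [Oi [Oj Ok]]]] p q r x y z.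
  set (P := cosh rho).
  assert (P1 : 1 <= P) by apply cosh_ge1.
  unfold orth_circle in Oi, Oj, Ok. rewrite cosh_hdist in Oi, Oj, Ok by auto.
  assert (Mx : mink vj vk = x) by (unfold x; rewrite cosh_hdist; auto).
  assert (My : mink vi vk = y) by (unfold y; rewrite mink_sym, cosh_hdist; auto).
  assert (Mz : mink vi vj = z) by (unfold z; rewrite cosh_hdist; auto).
  set (D := 1 + 2*x*y*z - x^2 - y^2 - z^2).
  assert (DX : D = P^2 * Xi p q r x y z).
  { pose proof (gram4 O vi vj vk) as g. cbv zeta in g.
    rewrite Oi, Oj, Ok, Mx, My, Mz in g.
    destruct HO as [HO _]; destruct Hi as [Hi' _]; destruct Hj as [Hj' _]; destruct Hk as [Hk' _].
    rewrite HO, Hi', Hj', Hk' in g. unfold D, Xi. fold p q r P in g.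
    apply Rminus_diag_uniq. rewrite <- g. ring. }
  set (L1 := hdist vj vk) in *. set (L2 := hdist vk vi) in *. set (L3 := hdist vi vj) in *.
  assert (L3p : 0 <= L3) by (rewrite Ez; apply arcosh_nonneg, len_val; auto).
  assert (Dp : 0 < D).
  { assert (h1 : z < cosh (L1 + L2)) by (apply cosh_lt2; lra).
    assert (h2 : cosh (L1 - L2) < z) by (apply cosh_lt2; lra).
    rewrite cosh_plus' in h1. rewrite cosh_minus' in h2. fold x y in h1, h2.
    assert (e : D = (x*y + sinh L1 * sinh L2 - z) * (z - (x*y - sinh L1 * sinh L2))).
    { assert (s1 : sinh L1 ^ 2 = x^2 - 1) by (unfold x; rewrite cosh_sinh; ring).
      assert (s2 : sinh L2 ^ 2 = y^2 - 1) by (unfold y; rewrite cosh_sinh; ring).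
      transitivity (sinh L1 ^ 2 * sinh L2 ^ 2 - (z - x*y)^2).
      - rewrite s1, s2. unfold D. ring.
      - ring. }
    rewrite e. apply Rmult_lt_0_compat; lra. }
  assert (Pp : 0 < P) by lra.
  assert (Xp : 0 < Xi p q r x y z).
  { destruct (Rlt_or_le 0 (Xi p q r x y z)) as [h|h]; auto.
    assert (P^2 * Xi p q r x y z <= 0).
    { assert (0 < P^2) by (apply pow_lt; lra). nra. }
    lra. }
  assert (sD : sqrt D = P * sqrt (Xi p q r x y z)).
  { rewrite DX, sqrt_mult_alt by (apply pow2_ge_0). rewrite sqrt_pow2 by lra. reflexivity. }
  assert (eq3 : tanh rho * sqrt D = sinh rho * sqrt (Xi p q r x y z)).
  { rewrite sD. unfold tanh. fold P. field. lra. }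
  split; [exact Xp|]. split; [|exact eq3].
  assert (Tx : x = q*r + a*sinh rj*sinh rk) by (unfold x; rewrite Ex; apply cosh_arcosh, len_val; auto).
  assert (Ty : y = r*p + b*sinh rk*sinh ri) by (unfold y; rewrite Ey; apply cosh_arcosh, len_val; auto).
  assert (Tz : z = p*q + c*sinh ri*sinh rj) by (unfold z; rewrite Ez; apply cosh_arcosh, len_val; auto).
  pose proof (delta_poly (exp ri) (exp rj) (exp rk) a b c) as dp.
  cbv zeta in dp. rewrite <- !exp_Ropp in dp.
  change ((exp ri + exp (-ri))/2) with (cosh ri) in dp.
  change ((exp rj + exp (-rj))/2) with (cosh rj) in dp.
  change ((exp rk + exp (-rk))/2) with (cosh rk) in dp.
  change ((exp ri - exp (-ri))/2) with (sinh ri) in dp.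
  change ((exp rj - exp (-rj))/2) with (sinh rj) in dp.
  change ((exp rk - exp (-rk))/2) with (sinh rk) in dp.
  fold p q r in dp. rewrite <- Tx, <- Ty, <- Tz in dp. fold D in dp.
  specialize (dp (Rgt_not_eq _ _ (exp_pos _)) (Rgt_not_eq _ _ (exp_pos _)) (Rgt_not_eq _ _ (exp_pos _))).
  set (S := sinh ri * sinh rj * sinh rk) in *.
  assert (Sp : 0 < S) by (unfold S; apply Rmult_lt_0_compat; [apply Rmult_lt_0_compat|]; apply sinh_pos; auto).
  assert (th : tanh rho ^ 2 * D = D - Xi p q r x y z).
  { unfold tanh. fold P. rewrite DX. pose proof (cosh_sinh rho) as cs. fold P in cs.
    field_simplify; [|lra]. rewrite cs. field. }
  assert (tp : 0 < tanh rho) by (unfold tanh; fold P; apply Rdiv_lt_0_compat; [apply sinh_pos|]; lra).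
  assert (Dl : 0 <= Delta_id a b c).
  { assert (0 <= D - Xi p q r x y z) by (rewrite DX; nra).
    assert (0 < S^2) by (apply pow_lt; lra). nra. }
  rewrite <- (sqrt_pow2 S) by lra. rewrite <- (sqrt_pow2 (tanh rho)) by lra.
  rewrite <- !sqrt_mult_alt by (apply pow2_ge_0).
  f_equal. rewrite th, dp. reflexivity.
Qed.
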